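(* Let $\sigma\ge0$, $\gamma>0$, $V=\sqrt{1+\sigma}$, let $(n^\varepsilon,u^\varepsilon,\phi^\varepsilon)$ be the solitary wave solution, and set $\widetilde N_\varepsilon(\xi)=\frac{n^\varepsilon(\xi)-1}{\varepsilon}$, $\widetilde E_\varepsilon(\xi)=\frac{-(\phi^\varepsilon)'(\xi)}{\varepsilon}$, and $h(n)=\frac{(V+\gamma\varepsilon)^2}{n^3}-\frac{\sigma}{n}$. There exist positive constants $\varepsilon_0$, $C$, $\delta_0$, independent of $\varepsilon$ and $\xi$, such that: (1) for all $0<\varepsilon<\varepsilon_0$, \[ \widetilde N_\varepsilon(0)>2\gamma V^{-1},\quad 4\gamma^2>\widetilde E_\varepsilon'(0)>2\gamma^2,\quad \tfrac12<\sup_{\xi\in\mathbb{R}}h(n^\varepsilon(\xi))<\tfrac32, \] \[ \sup_{\xi\in\mathbb{R}}\big(|\widetilde N_\varepsilon'(\xi)|+|\widetilde E_\varepsilon(\xi)|+|\widetilde E_\varepsilon''(\xi)|\big)\le C; \] (2) if $0<\delta<\delta_0$ ($\delta$ independent of $\varepsilon$ and $\xi$), then for all $0<\varepsilon<\varepsilon_0$ and every $\xi$ at which $\widetilde N_\varepsilon(\xi)\le\delta$, one has $|\widetilde E_\varepsilon(\xi)|>\sqrt\gamma\,\widetilde N_\varepsilon(\xi)$.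
   Context: For $\varepsilon>0$, consider the system in $\xi\in\mathbb{R}$: $-(V+\gamma\varepsilon)n'+(nu)'=0$, $-(V+\gamma\varepsilon)u'+uu'+\sigma n'/n=-\phi'$, $\varepsilon\phi''=e^\phi-n$, with $n\to1,u\to0,\phi\to0$ as $|\xi|\to\infty$. With $V=\sqrt{1+\sigma}$, for all sufficiently small $\varepsilon>0$ it has a non-trivial smooth solution unique up to translation; the ''solitary wave solution'' $(n^\varepsilon,u^\varepsilon,\phi^\varepsilon)$ is the translate that is even in $\xi$ and has all components strictly decreasing on $(0,\infty)$ (so $n^\varepsilon>1$, $\widetilde N_\varepsilon>0$ on $\mathbb{R}$ and $\widetilde E_\varepsilon\ge0$ on $[0,\infty)$). *)

(* Defs.v *)
From Stdlib Require Import Reals.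
From Coquelicot Require Import Coquelicot.
Open Scope R_scope.

Definition smooth (f : R -> R) : Prop :=
  forall (k : nat) (x : R), ex_derive_n f k x.

Definition Vspeed (sigma : R) : R := sqrt (1 + sigma).

Definition tw_solution (sigma gamma eps : R) (n u phi : R -> R) : Prop :=
  let c := Vspeed sigma + gamma * eps in
  smooth n /\ smooth u /\ smooth phi /\
  (forall x, 0 < n x) /\
  (forall x, - c * Derive n x + Derive (fun y => n y * u y) x = 0) /\
  (forall x, - c * Derive u x + u x * Derive u x + sigma * Derive n x / n x
             = - Derive phi x) /\
  (forall x, eps * Derive_n phi 2 x = exp (phi x) - n x) /\
  is_lim n p_infty 1 /\ is_lim n m_infty 1 /\
  is_lim u p_infty 0 /\ is_lim u m_infty 0 /\
  is_lim phi p_infty 0 /\ is_lim phi m_infty 0.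

Definition is_even (f : R -> R) : Prop := forall x, f (- x) = f x.

Definition strict_decr_pos (f : R -> R) : Prop :=
  forall x y, 0 < x -> x < y -> f y < f x.

Definition solitary_wave (sigma gamma eps : R) (n u phi : R -> R) : Prop :=
  tw_solution sigma gamma eps n u phi /\
  (exists x, n x <> 1 \/ u x <> 0 \/ phi x <> 0) /\
  is_even n /\ is_even u /\ is_even phi /\
  strict_decr_pos n /\ strict_decr_pos u /\ strict_decr_pos phi.

Definition Ntilde (eps : R) (n : R -> R) (x : R) : R := (n x - 1) / eps.
Definition Etilde (eps : R) (phi : R -> R) (x : R) : R := - Derive phi x / eps.
Definition hfun (sigma gamma eps nn : R) : R :=
  (Vspeed sigma + gamma * eps) ^ 2 / nn ^ 3 - sigma / nn.

(* Main.v *)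
Require Import Defs.
From Stdlib Require Import Reals Lra Psatz.
From Coquelicot Require Import Coquelicot.
Open Scope R_scope.


Ltac ad := auto_derive; [repeat split; try exact I; try lra | try (field; try lra)].

Lemma mono_le (f df : R -> R) (a b : R) : a <= b ->
  (forall x, a <= x <= b -> is_derive f x (df x)) ->
  (forall x, a <= x <= b -> 0 <= df x) -> f a <= f b.
Proof.
  intros Hab Hd Hp.
  destruct (MVT_gen f a b df) as [c [Hc Heq]].
  - intros x Hx. apply Hd. rewrite Rmin_left in Hx by lra. rewrite Rmax_right in Hx by lra. lra.
  - intros x Hx. rewrite Rmin_left in Hx by lra. rewrite Rmax_right in Hx by lra.
    apply continuity_pt_filterlim. apply (@ex_derive_continuous R_AbsRing R_NormedModule). exists (df x). apply Hd; lra.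
  - rewrite Rmin_left in Hc by lra. rewrite Rmax_right in Hc by lra.
    assert (0 <= df c * (b - a)) by (apply Rmult_le_pos; [apply Hp; lra | lra]). lra.
Qed.

Lemma nonneg_deriv (h dh : R -> R) (t : R) : 0 <= t ->
  (forall x, 0 <= x <= t -> is_derive h x (dh x)) ->
  (forall x, 0 <= x <= t -> 0 <= dh x) -> h 0 = 0 -> 0 <= h t.
Proof. intros Ht Hd Hp H0. rewrite <- H0. apply (mono_le h dh); auto. Qed.

Lemma exp_lb2 t : 0 <= t -> 1 + t + t^2/2 <= exp t.
Proof.
  intros Ht.
  assert (0 <= (fun x => exp x - 1 - x - x^2/2) t).
  { apply (nonneg_deriv (fun x => exp x - 1 - x - x^2/2) (fun x => exp x - 1 - x) t); [lra| | |].
    - intros x Hx. ad.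
    - intros x Hx. pose proof (exp_ineq1_le x). lra.
    - simpl. rewrite exp_0. field. }
  simpl in H. lra.
Qed.

Lemma exp_ub3 t : 0 <= t <= 1 -> exp t <= 1 + t + t^2/2 + t^3.
Proof.
  intros Ht.
  assert (H3 : forall x, 0 <= x <= 1 -> 0 <= 6 - exp x).
  { intros x Hx. pose proof exp_le_3. destruct (Req_dec x 1). subst; lra.
    assert (exp x < exp 1) by (apply exp_increasing; lra). lra. }
  assert (H2 : forall y, 0 <= y <= 1 -> 0 <= 1 + 6*y - exp y).
  { intros y Hy.
    assert (0 <= (fun x => 1 + 6*x - exp x) y).
    { apply (nonneg_deriv (fun x => 1 + 6*x - exp x) (fun x => 6 - exp x) y); try lra.
      - intros x Hx. ad.
      - intros x Hx. apply H3; lra.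
      - simpl. rewrite exp_0. lra. }
    simpl in H. lra. }
  assert (H1 : forall y, 0 <= y <= 1 -> 0 <= 1 + y + 3*y^2 - exp y).
  { intros y Hy.
    assert (0 <= (fun x => 1 + x + 3*x^2 - exp x) y).
    { apply (nonneg_deriv (fun x => 1 + x + 3*x^2 - exp x) (fun x => 1 + 6*x - exp x) y); try lra.
      - intros x Hx. ad.
      - intros x Hx. apply H2; lra.
      - simpl. rewrite exp_0. lra. }
    simpl in H. lra. }
  assert (0 <= (fun x => 1 + x + x^2/2 + x^3 - exp x) t).
  { apply (nonneg_deriv (fun x => 1 + x + x^2/2 + x^3 - exp x) (fun x => 1 + x + 3*x^2 - exp x) t); try lra.
    - intros x Hx. ad.
    - intros x Hx. apply H1; lra.
    - simpl. rewrite exp_0. lra. }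
  simpl in H. lra.
Qed.

Lemma ln_bounds m : 0 <= m -> m - m^2/2 <= ln (1+m) <= m - m^2/2 + m^3/3.
Proof.
  intros Hm. split.
  - assert (0 <= (fun x => ln (1+x) - (x - x^2/2)) m).
    { apply (nonneg_deriv (fun x => ln (1+x) - (x - x^2/2)) (fun x => x^2/(1+x)) m); [lra| | |].
      - intros x Hx. ad.
      - intros x Hx. apply Rdiv_le_0_compat; nra.
      - simpl. rewrite Rplus_0_r, ln_1. field. }
    simpl in H. lra.
  - assert (0 <= (fun x => (x - x^2/2 + x^3/3) - ln (1+x)) m).
    { apply (nonneg_deriv (fun x => (x - x^2/2 + x^3/3) - ln (1+x)) (fun x => x^3/(1+x)) m); [lra| | |].
      - intros x Hx. ad.
      - intros x Hx. apply Rdiv_le_0_compat; nra.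
      - simpl. rewrite Rplus_0_r, ln_1. field. }
    simpl in H. lra.
Qed.


Lemma pl (x X y Y : R) : 0 <= x -> x <= X -> 0 <= y -> y <= Y -> x * y <= X * Y.
Proof. intros; apply Rmult_le_compat; auto. Qed.

Lemma D_alg (L e m a s F : R) :
  1 <= L -> 0 < e -> 48 * L^3 * e <= 1 -> 0 <= m <= 4*L*e -> 0 <= a <= 3*L^2*e ->
  0 <= s -> 1 + a + s <= L^2 ->
  (1+a)*m - ((3*(1+a+s) - s)/2)*m^2 - s*m^3/3 <= F ->
  F <= (1+a)*m - ((3*(1+a+s) - s)/2)*m^2 + 2*(1+a+s)*m^3 ->
  0 <= F <= 3 * L^2 * m /\
  (1+a)*m - ((3*(1+a+s) - s)/2)*m^2 - s*m^3/3 >= 0 /\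
  (1+a)*m - ((3*(1+a+s) - s)/2)*m^2 + 2*(1+a+s)*m^3 <= 1/4 /\
  (1+a)*m - ((3*(1+a+s) - s)/2)*m^2 + 2*(1+a+s)*m^3 <= 3*L^2*m.
Proof.
  intros HL He HLe Hm Ha Hs Hc Hlo Hhi.
  set (b := (3*(1+a+s) - s)/2) in *.
  assert (L2 : 1 <= L^2) by (timeout 10 nra).
  assert (L3 : 1 <= L^3) by (timeout 10 nra).
  assert (Hb0 : 0 <= b) by (unfold b; lra).
  assert (Hb1 : b <= 3/2 * L^2) by (unfold b; lra).
  assert (Hm1 : m * L^2 <= 1/12).
  { assert (m * L^2 <= 4*L*e*L^2) by (apply Rmult_le_compat_r; lra). (timeout 10 nra). }
  assert (Hm2 : m <= 1/12) by (timeout 10 nra).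
  assert (Hbm : b * m <= 1/8) by (timeout 10 nra).
  assert (Hsm : s * m <= 1/12) by (timeout 10 nra).
  assert (Hlo0 : (1+a)*m - b*m^2 - s*m^3/3 >= 0).
  { assert (b*m^2 <= m/8) by (timeout 10 nra). assert (s*m^3/3 <= m/8) by (timeout 10 nra). (timeout 10 nra). }
  assert (Hhi1 : (1+a)*m - b*m^2 + 2*(1+a+s)*m^3 <= 3*L^2*m).
  { assert (m^2 <= 1) by (timeout 10 nra).
    assert ((1+a+s)*m^2 <= L^2 * 1) by (apply pl; (timeout 10 nra)).
    assert (2*(1+a+s)*m^3 <= 2*L^2*m).
    { replace (2*(1+a+s)*m^3) with (2*((1+a+s)*m^2)*m) by ring. (timeout 10 nra). }
    assert (b*m^2 >= 0) by (timeout 10 nra). (timeout 10 nra). }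
  split; [split|split; [|split]]; try lra.
Qed.

Lemma exp_mono x y : x <= y -> exp x <= exp y.
Proof. intros H. destruct (Req_dec x y). subst; lra. apply Rlt_le, exp_increasing; lra. Qed.

Lemma D_err (L e m a s F : R) :
  1 <= L -> 0 < e -> 48 * L^3 * e <= 1 -> 0 <= m <= 4*L*e -> 0 <= a <= 3*L^2*e ->
  0 <= s -> 1 + a + s <= L^2 ->
  (1+a)*m - ((3*(1+a+s) - s)/2)*m^2 - s*m^3/3 <= F ->
  F <= (1+a)*m - ((3*(1+a+s) - s)/2)*m^2 + 2*(1+a+s)*m^3 ->
  Rabs (exp F - 1 - m - (a*m - (1+s)*m^2)) <= 1000 * L^8 * e^2 * m.
Proof.
  intros HL He HLe Hm Ha Hs Hc Hlo Hhi.
  destruct (D_alg L e m a s F HL He HLe Hm Ha Hs Hc Hlo Hhi) as [[HF0 HF1] [Hlo0 [Hhi1 Hhi2]]].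
  set (b := (3*(1+a+s) - s)/2) in *.
  set (Flo := (1+a)*m - b*m^2 - s*m^3/3) in *.
  set (Fhi := (1+a)*m - b*m^2 + 2*(1+a+s)*m^3) in *.
  assert (L2 : 1 <= L^2) by (timeout 10 nra).
  assert (L3 : 1 <= L^3) by (timeout 10 nra).
  assert (L4 : L^2 <= L^4) by (timeout 10 nra).
  assert (L6 : L^4 <= L^6) by (timeout 10 nra).
  assert (L8 : L^6 <= L^8) by (timeout 10 nra).
  assert (L34 : L^3 <= L^8) by (timeout 10 nra).
  assert (Hb0 : 0 <= b) by (unfold b; lra).
  assert (Hb1 : b <= 3/2 * L^2) by (unfold b; lra).
  assert (Hm1 : m <= 1/12).
  { assert (m * L^2 <= 4*L*e*L^2) by (apply Rmult_le_compat_r; lra). (timeout 10 nra). }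
  assert (Hmm : m^2 <= 16 * L^2 * e^2).
  { assert (m*m <= (4*L*e)*(4*L*e)) by (apply pl; lra). (timeout 10 nra). }
  assert (M3 : m^3 <= 16 * L^2 * e^2 * m).
  { replace (m^3) with (m^2*m) by ring. apply Rmult_le_compat_r; lra. }
  assert (M4 : m^4 <= m^3).
  { replace (m^4) with (m^3*m) by ring. assert (0 <= m^3) by (apply pow_le; lra). (timeout 10 nra). }
  assert (Ham : a * m <= 12 * L^3 * e^2).
  { assert (a*m <= (3*L^2*e)*(4*L*e)) by (apply pl; lra). (timeout 10 nra). }
  assert (Ham2 : a * m^2 <= 12 * L^3 * e^2 * m).
  { replace (a*m^2) with ((a*m)*m) by ring. apply Rmult_le_compat_r; lra. }
  apply Rabs_le; split.
  -
    assert (E1 : 1 + Flo + Flo^2/2 <= exp F).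
    { eapply Rle_trans. apply exp_lb2; lra. apply exp_mono; lra. }
    assert (Y : 0 <= b*m^2 + s*m^3/3).
    { assert (0 <= m^3) by (apply pow_le; lra). (timeout 10 nra). }
    assert (Q : Flo^2 >= (1+a)^2*m^2 - 2*(1+a)*m*(b*m^2 + s*m^3/3)).
    { unfold Flo. (timeout 10 nra). }
    assert (Id : Flo + ((1+a)^2*m^2 - 2*(1+a)*m*(b*m^2 + s*m^3/3))/2 - m - (a*m - (1+s)*m^2)
                 = (a^2/2 - a/2)*m^2 - (s/3 + (1+a)*b)*m^3 - (1+a)*s*m^4/3).
    { unfold Flo, b. field. }
    assert (K3 : s/3 + (1+a)*b + (1+a)*s/3 <= 3 * L^4).
    { assert ((1+a)*b <= L^2 * (3/2*L^2)) by (apply pl; lra).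
      assert ((1+a)*s <= L^2 * L^2) by (apply pl; lra). (timeout 10 nra). }
    assert (P4 : (1+a)*s*m^4/3 <= (1+a)*s*m^3/3).
    { assert (0 <= (1+a)*s) by (timeout 10 nra). (timeout 10 nra). }
    assert (K3m : (s/3 + (1+a)*b + (1+a)*s/3) * m^3 <= 3*L^4 * (16 * L^2 * e^2 * m)).
    { apply pl; try lra. assert (0 <= (1+a)*b) by (timeout 10 nra). assert (0<=(1+a)*s) by (timeout 10 nra). lra.
      apply pow_le; lra. }
    assert (0 <= a^2/2*m^2) by (timeout 10 nra).
    assert (L6e : 48 * L^6 * e^2 * m <= 48 * L^8 * e^2 * m).
    { apply Rmult_le_compat_r; try lra. apply Rmult_le_compat_r; (timeout 10 nra). }
    assert (L3e : 6 * L^3 * e^2 * m <= 6 * L^8 * e^2 * m).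
    { apply Rmult_le_compat_r; try lra. apply Rmult_le_compat_r; (timeout 10 nra). }
    assert (Ha2 : (a^2/2 - a/2)*m^2 >= - (a/2*m^2)) by (timeout 10 nra).
    assert (0 <= L^8*e^2*m) by (apply Rmult_le_pos; [|lra]; apply Rmult_le_pos; apply pow_le; lra).
    lra.
  -
    assert (E1 : exp F <= 1 + Fhi + Fhi^2/2 + Fhi^3).
    { eapply Rle_trans. apply exp_mono. exact Hhi. apply exp_ub3; lra. }
    set (z := b*m^2 - 2*(1+a+s)*m^3).
    assert (Id : Fhi + Fhi^2/2 - m - (a*m - (1+s)*m^2)
      = (a^2/2 - a/2)*m^2 + 2*(1+a+s)*m^3 - (1+a)*b*m^3 + 2*(1+a)*(1+a+s)*m^4 + z^2/2).
    { unfold Fhi, z, b. field. }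
    assert (Z : z^2 <= (7/2*L^2)^2 * m^4).
    { assert (Rabs z <= 7/2*L^2 * m^2).
      { unfold z. apply Rabs_le. assert (0 <= m^3 <= m^2) by (split; (timeout 10 nra)).
        assert (b*m^2 <= 3/2*L^2 * m^2) by (apply pl; (timeout 10 nra)).
        assert ((1+a+s)*m^3 <= L^2 * m^2) by (apply pl; lra).
        assert (0 <= b*m^2) by (timeout 10 nra).
        assert (0 <= (1+a+s)*m^3) by (timeout 10 nra).
        split; lra. }
      assert (z^2 = Rabs z * Rabs z) by (rewrite <- Rabs_mult, Rabs_right; [ring| (timeout 10 nra)]).
      assert (0 <= Rabs z) by apply Rabs_pos.
      assert (Rabs z * Rabs z <= (7/2*L^2*m^2)*(7/2*L^2*m^2)) by (apply pl; lra). (timeout 10 nra). }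
    assert (F3 : Fhi^3 <= (3*L^2*m)^3).
    { assert (0 <= Fhi) by lra. assert (Fhi <= 3*L^2*m) by lra.
      assert (Fhi*Fhi <= (3*L^2*m)*(3*L^2*m)) by (apply pl; lra).
      assert (Fhi*Fhi*Fhi <= (3*L^2*m)*(3*L^2*m)*(3*L^2*m)) by (apply pl; (timeout 10 nra)). (timeout 10 nra). }
    assert (T1 : (a^2/2)*m^2 <= 5 * L^8 * e^2 * m).
    { assert (a*a <= (3*L^2*e)*(3*L^2*e)) by (apply pl; lra).
      assert (a^2*m^2 <= 9*L^4*e^2 * m).
      { assert (m^2 <= m) by (timeout 10 nra). assert (0 <= a^2) by (timeout 10 nra).
        assert (a^2 * m^2 <= (9*L^4*e^2) * m) by (apply pl; (timeout 10 nra)). lra. }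
      assert (9*L^4*e^2*m <= 9*L^8*e^2*m).
      { apply Rmult_le_compat_r; try lra. apply Rmult_le_compat_r; (timeout 10 nra). }
      (timeout 10 nra). }
    assert (T2 : 2*(1+a+s)*m^3 <= 32 * L^8 * e^2 * m).
    { assert ((1+a+s)*m^3 <= L^2 * (16*L^2*e^2*m)) by (apply pl; try lra; apply pow_le; lra).
      assert (L^4*e^2*m <= L^8*e^2*m).
      { apply Rmult_le_compat_r; try lra. apply Rmult_le_compat_r; (timeout 10 nra). }
      (timeout 10 nra). }
    assert (T3 : 2*(1+a)*(1+a+s)*m^4 <= 32 * L^8 * e^2 * m).
    { assert ((1+a)*(1+a+s) <= L^2*L^2) by (apply pl; lra).
      assert ((1+a)*(1+a+s)*m^4 <= (L^2*L^2)*(16*L^2*e^2*m)).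
      { apply pl; try lra. (timeout 10 nra). apply pow_le; lra. }
      assert (L^6*e^2*m <= L^8*e^2*m).
      { apply Rmult_le_compat_r; try lra. apply Rmult_le_compat_r; (timeout 10 nra). }
      (timeout 10 nra). }
    assert (T4 : z^2/2 <= 100 * L^8 * e^2 * m).
    { assert ((7/2*L^2)^2 * m^4 <= (49/4*L^4) * (16*L^2*e^2*m)).
      { apply pl; try (timeout 10 nra); try (apply pow_le; lra). }
      assert (L^6*e^2*m <= L^8*e^2*m).
      { apply Rmult_le_compat_r; try lra. apply Rmult_le_compat_r; (timeout 10 nra). }
      (timeout 10 nra). }
    assert (T5 : Fhi^3 <= 432 * L^8 * e^2 * m).
    { assert ((3*L^2*m)^3 = 27 * L^6 * m^3) by ring.
      assert (L^6 * m^3 <= L^6 * (16 * L^2 * e^2 * m)) by (apply Rmult_le_compat_l; (timeout 10 nra)).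
      (timeout 10 nra). }
    assert (0 <= (1+a)*b*m^3) by (apply Rmult_le_pos; [apply Rmult_le_pos; lra | apply pow_le; lra]).
    assert (0 <= a/2*m^2) by (apply Rmult_le_pos; [lra | apply pow_le; lra]).
    assert (0 <= L^8*e^2*m) by (apply Rmult_le_pos; [|lra]; apply Rmult_le_pos; apply pow_le; lra).
    lra.
Qed.


Definition Fn c s n := c^2/2 * (1 - 1/n^2) - s * ln n.
Definition Gn c s n := c^2 * (1 - 1/n) - s * (n - 1).
Definition Pn c s n := exp (Fn c s n) - 1 - Gn c s n.
Definition hn c s n := c^2/n^3 - s/n.

Lemma Pn_1 c s : Pn c s 1 = 0.
Proof. unfold Pn, Fn, Gn. rewrite ln_1. replace (c^2/2*(1-1/1^2) - s*0) with 0 by field.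
  rewrite exp_0. field. Qed.

Lemma Pn_deriv c s x : 0 <= x ->
  is_derive (fun y => Pn c s (1+y)) x (hn c s (1+x) * (exp (Fn c s (1+x)) - (1+x))).
Proof.
  intros Hx.
  assert (H1 : is_derive (fun y => Fn c s (1+y)) x (hn c s (1+x))).
  { unfold Fn, hn. auto_derive.
    - repeat split; try lra; apply Rgt_not_eq; nra.
    - field. lra. }
  assert (H2 : is_derive (fun y => exp (Fn c s (1+y))) x (hn c s (1+x) * exp (Fn c s (1+x)))).
  { apply (is_derive_comp exp (fun y => Fn c s (1+y))). apply is_derive_exp. exact H1. }
  assert (H3 : is_derive (fun y => 1 + Gn c s (1+y)) x ((1+x) * hn c s (1+x))).
  { unfold Gn, hn. auto_derive.
    - repeat split; try lra; apply Rgt_not_eq; nra.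
    - field. lra. }
  pose proof (is_derive_minus _ _ _ _ _ H2 H3) as H4.
  unfold minus, plus, opp in H4; simpl in H4.
  eapply is_derive_ext; [| replace (hn c s (1 + x) * (exp (Fn c s (1 + x)) - (1 + x))) with
     (hn c s (1 + x) * exp (Fn c s (1 + x)) + - ((1 + x) * hn c s (1 + x))) by ring; exact H4].
  intros t. unfold Pn. simpl. ring.
Qed.

Lemma inv_sq_bounds m : 0 <= m -> 1 - 2*m + 3*m^2 - 4*m^3 <= 1/(1+m)^2 <= 1 - 2*m + 3*m^2.
Proof.
  intros Hm. set (r := 1/(1+m)^2).
  assert (Hr : r * (1+m)^2 = 1) by (unfold r; field; lra).
  assert (Hr0 : 0 < r) by (unfold r; apply Rdiv_lt_0_compat; [lra| apply pow_lt; lra]).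
  split.
  - assert ((1+m)^2 * (1 - 2*m + 3*m^2 - 4*m^3) = 1 - 5*m^4 - 4*m^5) by ring.
    assert (0 <= m^4) by (apply pow_le; lra). assert (0 <= m^5) by (apply pow_le; lra).
    assert ((1+m)^2 * (1 - 2*m + 3*m^2 - 4*m^3) <= (1+m)^2 * r) by lra.
    apply Rmult_le_reg_l in H2; [lra| apply pow_lt; lra].
  - assert ((1+m)^2 * (1 - 2*m + 3*m^2) = 1 + 4*m^3 + 3*m^4) by ring.
    assert (0 <= m^4) by (apply pow_le; lra). assert (0 <= m^3) by (apply pow_le; lra).
    assert ((1+m)^2 * r <= (1+m)^2 * (1 - 2*m + 3*m^2)) by lra.
    apply Rmult_le_reg_l in H2; [lra| apply pow_lt; lra].
Qed.

Lemma inv_cube_lb m : 0 <= m -> 1 - 3*m <= 1/(1+m)^3.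
Proof.
  intros Hm. set (r := 1/(1+m)^3).
  assert (Hr : r * (1+m)^3 = 1) by (unfold r; field; lra).
  assert ((1+m)^3 * (1 - 3*m) = 1 - 6*m^2 - 8*m^3 - 3*m^4) by ring.
  assert (0 <= m^4) by (apply pow_le; lra). assert (0 <= m^3) by (apply pow_le; lra).
  assert (0 <= m^2) by (apply pow_le; lra).
  assert ((1+m)^3 * (1 - 3*m) <= (1+m)^3 * r) by lra.
  apply Rmult_le_reg_l in H3; [lra| apply pow_lt; lra].
Qed.

Lemma Fn_bounds c s a m : 0 <= s -> c^2 = 1 + a + s -> 0 <= m ->
  (1+a)*m - ((3*(1+a+s) - s)/2)*m^2 - s*m^3/3 <= Fn c s (1+m) <=
  (1+a)*m - ((3*(1+a+s) - s)/2)*m^2 + 2*(1+a+s)*m^3.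
Proof.
  intros Hs Hc Hm. unfold Fn.
  destruct (inv_sq_bounds m Hm) as [R1 R2].
  destruct (ln_bounds m Hm) as [L1 L2].
  assert (Hc0 : 0 <= c^2) by (apply pow2_ge_0).
  assert (c^2/2 * (1 - 1/(1+m)^2) >= c^2/2 * (1 - (1 - 2*m + 3*m^2))) by
    (apply Rle_ge, Rmult_le_compat_l; lra).
  assert (c^2/2 * (1 - 1/(1+m)^2) <= c^2/2 * (1 - (1 - 2*m + 3*m^2 - 4*m^3))) by
    (apply Rmult_le_compat_l; lra).
  assert (s * ln (1+m) <= s * (m - m^2/2 + m^3/3)) by (apply Rmult_le_compat_l; lra).
  assert (s * ln (1+m) >= s * (m - m^2/2)) by (apply Rle_ge, Rmult_le_compat_l; lra).
  rewrite Hc in *. split; nra.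
Qed.

Lemma hn_bounds c s m : 0 <= s -> s <= c^2 -> 0 <= m <= 1 ->
  c^2 - s - 3*c^2*m <= hn c s (1+m) <= c^2 - s.
Proof.
  intros Hs Hsc Hm. unfold hn.
  assert (Hc0 : 0 <= c^2) by (apply pow2_ge_0).
  pose proof (inv_cube_lb m (proj1 Hm)) as I3.
  set (q := /(1+m)).
  assert (Hq : q * (1+m) = 1) by (unfold q; field; lra).
  assert (Hq0 : 0 < q) by (unfold q; apply Rinv_0_lt_compat; lra).
  assert (Hq1 : q <= 1) by nra.
  assert (Hq2 : 1/2 <= q) by nra.
  replace (c^2/(1+m)^3) with (c^2 * q^3) by (unfold q; field; lra).
  replace (1/(1+m)^3) with (q^3) in I3 by (unfold q; field; lra).
  replace (s/(1+m)) with (s*q) by (unfold q; field; lra).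
  split.
  - assert (c^2 * q^3 >= c^2 * (1 - 3*m)) by (apply Rle_ge, Rmult_le_compat_l; lra).
    assert (s*q <= s) by nra. lra.
  - assert (0 <= (1-q)*(c^2*(1+q+q^2) - s)) by (apply Rmult_le_pos; nra).
    nra.
Qed.


Definition Lam s g := 1 + Vspeed s + g.
Definition cc s g e := Vspeed s + g * e.
Definition aa s g e := (cc s g e)^2 - s - 1.

Lemma V_facts s : 0 <= s -> 1 <= Vspeed s /\ (Vspeed s)^2 = 1 + s.
Proof.
  intros Hs. unfold Vspeed. split.
  - apply (Rle_trans _ (sqrt 1)); [rewrite sqrt_1; lra | apply sqrt_le_1_alt; lra].
  - rewrite <- Rsqr_pow2. apply Rsqr_sqrt. lra.
Qed.

Lemma param_facts s g e : 0 <= s -> 0 < g -> 0 < e -> 48 * (Lam s g)^3 * e <= 1 ->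
  1 <= Lam s g /\ e <= 1 /\ aa s g e = 2 * Vspeed s * g * e + g^2 * e^2 /\
  2 * g * e <= aa s g e <= 3 * (Lam s g)^2 * e /\
  1 + aa s g e + s <= (Lam s g)^2 /\ (cc s g e)^2 = 1 + aa s g e + s /\
  g <= Lam s g /\ Vspeed s <= Lam s g.
Proof.
  intros Hs Hg He HL. destruct (V_facts s Hs) as [V1 V2].
  unfold aa, cc, Lam in *. set (V := Vspeed s) in *.
  assert (L1 : 1 <= 1 + V + g) by lra.
  assert (1 <= (1+V+g)^3) by (apply pow_R1_Rle; lra).
  assert (e <= 1) by nra.
  assert (Ha : (V + g*e)^2 - s - 1 = 2*V*g*e + g^2*e^2) by nra.
  repeat split; try lra.
  - rewrite Ha. assert (0 <= g*e) by (apply Rmult_le_pos; lra).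
    assert (2*g*e*1 <= 2*g*e*V) by (apply Rmult_le_compat_l; lra). assert (0 <= g^2*e^2) by nra. lra.
  - rewrite Ha. assert (g^2*e^2 <= g^2 * e).
    { assert (0 <= g^2*e) by (apply Rmult_le_pos; [apply pow2_ge_0|lra]).
      replace (g^2*e^2) with ((g^2*e)*e) by ring. nra. }
    assert (V*g <= (1+V+g)*(1+V+g)) by (apply pl; lra).
    assert (g*g <= (1+V+g)*(1+V+g)) by (apply pl; lra).
    assert (g^2*e <= (1+V+g)^2*e) by (apply Rmult_le_compat_r; lra).
    assert (2*V*g*e <= 2*(1+V+g)^2*e) by (apply Rmult_le_compat_r; lra).
    lra.
  - assert (g*e <= g*1) by (apply Rmult_le_compat_l; lra).
    assert (0 <= V + g*e) by nra.
    assert ((V + g*e)*(V+g*e) <= (1 + V + g)*(1+V+g)) by (apply pl; lra).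
    nra.
Qed.

Lemma core s g e m : 0 <= s -> 0 < g -> 0 < e -> 48 * (Lam s g)^3 * e <= 1 -> 0 <= m <= 4*g*e ->
  Rabs (hn (cc s g e) s (1+m) * (exp (Fn (cc s g e) s (1+m)) - (1+m))
        - (aa s g e * m - (1+s)*m^2)) <= 20000 * (Lam s g)^11 * e^2 * m /\
  Rabs (hn (cc s g e) s (1+m) - 1) <= 15 * (Lam s g)^3 * e /\
  0 <= Fn (cc s g e) s (1+m) <= 3 * (Lam s g)^2 * m /\
  hn (cc s g e) s (1+m) <= 1 + aa s g e.
Proof.
  intros Hs Hg He HLe Hm.
  destruct (param_facts s g e Hs Hg He HLe) as [HL [He1 [Ha [[Ha1 Ha2] [Hc [Hc2 [HgL HVL]]]]]]].
  set (L := Lam s g) in *. set (a := aa s g e) in *. set (c := cc s g e) in *.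
  assert (Hm' : 0 <= m <= 4*L*e) by nra.
  assert (Ha' : 0 <= a <= 3*L^2*e) by nra.
  destruct (Fn_bounds c s a m Hs Hc2 (proj1 Hm)) as [F1 F2].
  pose proof (D_err L e m a s _ HL He HLe Hm' Ha' Hs Hc F1 F2) as HD.
  destruct (D_alg L e m a s _ HL He HLe Hm' Ha' Hs Hc F1 F2) as [[HF0 HF1] _].
  assert (L2 : 1 <= L^2) by nra.
  assert (L3 : L^2 <= L^3) by nra.
  assert (L8 : L^3 <= L^8) by (replace (L^8) with (L^3*L^5) by ring; assert (1 <= L^5) by (apply pow_R1_Rle; lra); nra).
  assert (L11 : L^8 <= L^11) by (replace (L^11) with (L^8*L^3) by ring; assert (1 <= L^3) by (apply pow_R1_Rle; lra); assert (0 <= L^8) by (apply pow_le; lra); nra).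
  assert (Hm1 : m <= 1/12).
  { assert (m * L^2 <= 4*L*e*L^2) by (apply Rmult_le_compat_r; lra). nra. }
  assert (Hsc : s <= c^2) by lra.
  assert (Hm2 : 0 <= m <= 1) by lra.
  destruct (hn_bounds c s m Hs Hsc Hm2) as [H1 H2].
  set (h := hn c s (1+m)) in *. set (F := Fn c s (1+m)) in *.
  assert (Hc2m : c^2 * m <= L^2 * (4*L*e)) by (apply pl; try lra; apply pow2_ge_0).
  assert (Hh : Rabs (h - 1) <= 15 * L^3 * e).
  { apply Rabs_le. split; nra. }
  set (T := a*m - (1+s)*m^2).
  set (D := exp F - (1+m)).
  assert (HT : Rabs T <= 7 * L^3 * e * m).
  { unfold T. apply Rabs_le.
    assert (a*m <= 3*L^2*e*m) by (apply Rmult_le_compat_r; lra).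
    assert ((1+s)*m <= L^2*(4*L*e)) by (apply pl; lra).
    assert ((1+s)*m^2 <= 4*L^3*e*m).
    { replace ((1+s)*m^2) with (((1+s)*m)*m) by ring.
      replace (4*L^3*e*m) with ((L^2*(4*L*e))*m) by ring. apply Rmult_le_compat_r; lra. }
    assert (L^2*e*m <= L^3*e*m) by (apply Rmult_le_compat_r; [lra|]; apply Rmult_le_compat_r; lra).
    assert (0 <= a*m) by nra. assert (0 <= (1+s)*m^2) by nra.
    split; lra. }
  assert (HDT : Rabs (D - T) <= 1000 * L^8 * e^2 * m).
  { unfold D, T. replace (exp F - (1+m) - (a*m - (1+s)*m^2)) with (exp F - 1 - m - (a*m - (1+s)*m^2)) by ring. exact HD. }
  assert (HDb : Rabs D <= 1007 * L^8 * e * m).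
  { assert (Rabs D <= Rabs (D - T) + Rabs T).
    { replace D with ((D - T) + T) at 1 by ring. apply Rabs_triang. }
    assert (L^8*e^2*m <= L^8*e*m).
    { assert (0 <= L^8) by (apply pow_le; lra).
      replace (L^8*e^2*m) with ((L^8*e*m)*e) by ring. assert (0 <= L^8*e*m) by (apply Rmult_le_pos; [apply Rmult_le_pos|]; lra). nra. }
    assert (L^3*e*m <= L^8*e*m) by (apply Rmult_le_compat_r; [lra|]; apply Rmult_le_compat_r; lra).
    lra. }
  split; [|split; [|split]]; try lra.
  - replace (h * D - T) with ((D - T) + (h - 1) * D) by ring.
    eapply Rle_trans. apply Rabs_triang. rewrite Rabs_mult.
    assert (Rabs (h-1) * Rabs D <= (15*L^3*e) * (1007*L^8*e*m)) by (apply pl; try apply Rabs_pos; lra).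
    assert (L^8*e^2*m <= L^11*e^2*m) by (apply Rmult_le_compat_r; [lra|]; apply Rmult_le_compat_r; [nra|lra]).
    assert ((15*L^3*e) * (1007*L^8*e*m) = 15105 * L^11*e^2*m) by ring.
    assert (0 <= L^11*e^2*m) by (apply Rmult_le_pos; [apply Rmult_le_pos; [apply pow_le|]|]; nra).
    lra.
Qed.

Lemma deriv_comb (P : R -> R) (dP K a b sg x : R) : is_derive P x dP ->
  is_derive (fun y => K*y^2/2 + sg * (P y - (a*y^2/2 - b*y^3/3))) x
            (K*x + sg * (dP - (a*x - b*x^2))).
Proof.
  intros HP.
  assert (H1 : is_derive (fun y => K*y^2/2 - sg*(a*y^2/2 - b*y^3/3)) x (K*x - sg*(a*x - b*x^2))).
  { auto_derive. exact I. field. }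
  assert (H2 : is_derive (fun y => sg * P y) x (sg * dP)).
  { apply (is_derive_scal P x sg dP HP). }
  pose proof (is_derive_plus _ _ _ _ _ H1 H2) as H3.
  unfold plus in H3; simpl in H3.
  eapply is_derive_ext; [| replace (K*x + sg*(dP - (a*x - b*x^2))) with
    (K*x - sg*(a*x - b*x^2) + sg*dP) by ring; exact H3].
  intros t. simpl. ring.
Qed.

Lemma P_est s g e m : 0 <= s -> 0 < g -> 0 < e -> 48 * (Lam s g)^3 * e <= 1 -> 0 <= m <= 4*g*e ->
  Rabs (Pn (cc s g e) s (1+m) - (aa s g e * m^2/2 - (1+s)*m^3/3))
    <= 10000 * (Lam s g)^11 * e^2 * m^2.
Proof.
  intros Hs Hg He HLe Hm.
  set (K := 20000 * (Lam s g)^11 * e^2).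
  set (c := cc s g e). set (a := aa s g e).
  assert (HK : forall x, 0 <= x <= m ->
    Rabs (hn c s (1+x) * (exp (Fn c s (1+x)) - (1+x)) - (a*x - (1+s)*x^2)) <= K * x).
  { intros x Hx. destruct (core s g e x Hs Hg He HLe ltac:(lra)) as [H _].
    unfold K. replace (20000 * Lam s g ^ 11 * e ^ 2 * x) with (20000 * Lam s g ^ 11 * e ^ 2 * x) in H by ring.
    exact H. }
  assert (P0 : Pn c s (1+0) = 0) by (rewrite Rplus_0_r; apply Pn_1).
  apply Rabs_le; split.
  - assert (0 <= (fun y => K*y^2/2 + 1 * (Pn c s (1+y) - (a*y^2/2 - (1+s)*y^3/3))) m).
    { apply (nonneg_deriv (fun y => K*y^2/2 + 1 * (Pn c s (1+y) - (a*y^2/2 - (1+s)*y^3/3)))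
        (fun x => K*x + 1 * (hn c s (1+x) * (exp (Fn c s (1+x)) - (1+x)) - (a*x - (1+s)*x^2))) m);
      [lra | | | ].
      - intros x Hx. apply deriv_comb. apply Pn_deriv. lra.
      - intros x Hx. specialize (HK x Hx). apply Rabs_le_between in HK. lra.
      - rewrite P0. field. }
    simpl in H. unfold K in H. lra.
  - assert (0 <= (fun y => K*y^2/2 + (-1) * (Pn c s (1+y) - (a*y^2/2 - (1+s)*y^3/3))) m).
    { apply (nonneg_deriv (fun y => K*y^2/2 + (-1) * (Pn c s (1+y) - (a*y^2/2 - (1+s)*y^3/3)))
        (fun x => K*x + (-1) * (hn c s (1+x) * (exp (Fn c s (1+x)) - (1+x)) - (a*x - (1+s)*x^2))) m);
      [lra | | | ].
      - intros x Hx. apply deriv_comb. apply Pn_deriv. lra.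
      - intros x Hx. specialize (HK x Hx). apply Rabs_le_between in HK. lra.
      - rewrite P0. field. }
    simpl in H. unfold K in H. lra.
Qed.


Lemma lim_eps f l : is_lim f p_infty (Finite l) ->
  forall eta, 0 < eta -> exists M, forall y, M < y -> Rabs (f y - l) < eta.
Proof.
  intros H eta He. apply is_lim_spec in H. specialize (H (mkposreal eta He)).
  simpl in H. destruct H as [M HM]. exists M. exact HM.
Qed.

Lemma const_deriv0 (w : R -> R) : (forall x, is_derive w x 0) -> forall x y, w x = w y.
Proof.
  intros H.
  assert (Hle : forall x y, x <= y -> w x <= w y).
  { intros x y Hxy. apply (mono_le w (fun _ => 0)); auto; intros; lra. }
  assert (Hge : forall x y, x <= y -> - w x <= - w y).
  { intros x y Hxy. apply (mono_le (fun t => - w t) (fun _ => 0)); auto; try (intros; lra).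
    intros t _. replace 0 with (- 0) by ring. apply (is_derive_opp w t 0). apply H. }
  intros x y. destruct (Rle_dec x y).
  - specialize (Hle x y r). specialize (Hge x y r). lra.
  - specialize (Hle y x ltac:(lra)). specialize (Hge y x ltac:(lra)). lra.
Qed.

Lemma zero_small z B eta1 : 0 <= B -> 0 < eta1 ->
  (forall eta, 0 < eta <= eta1 -> Rabs z <= B * eta) -> z = 0.
Proof.
  intros HB He H. destruct (Req_dec z 0) as [|Hz]; auto.
  exfalso. assert (Hz' : 0 < Rabs z) by (apply Rabs_pos_lt; auto).
  set (eta := Rmin eta1 (Rabs z / (2*(B+1)))).
  assert (0 < eta) by (unfold eta; apply Rmin_pos; [lra| apply Rdiv_lt_0_compat; lra]).
  assert (eta <= eta1) by apply Rmin_l.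
  assert (eta <= Rabs z / (2*(B+1))) by apply Rmin_r.
  specialize (H eta ltac:(lra)).
  assert (B * eta <= (B+1) * (Rabs z / (2*(B+1)))) by (apply pl; lra).
  assert ((B+1) * (Rabs z / (2*(B+1))) = Rabs z / 2) by (field; lra).
  lra.
Qed.

Lemma cont_eps f x0 : ex_derive f x0 ->
  forall eta, 0 < eta -> exists d, 0 < d /\ forall y, Rabs (y - x0) < d -> Rabs (f y - f x0) < eta.
Proof.
  intros Hd eta He.
  assert (Hc : continuity_pt f x0).
  { apply continuity_pt_filterlim. apply (@ex_derive_continuous R_AbsRing R_NormedModule). exact Hd. }
  destruct (Hc eta He) as [d [Hd0 Hd1]].
  exists d. split; auto. intros y Hy.
  destruct (Req_dec y x0). subst. rewrite Rminus_diag, Rabs_R0. lra.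
  apply (Hd1 y); split; [split; [exact I| auto] | exact Hy].
Qed.

Lemma smooth_d1 f : smooth f -> forall x, ex_derive f x.
Proof. intros H x. exact (H 1%nat x). Qed.

Lemma smooth_d2 f : smooth f -> forall x, ex_derive (Derive f) x.
Proof. intros H x. exact (H 2%nat x). Qed.

Lemma even_deriv0 f : is_even f -> ex_derive f 0 -> Derive f 0 = 0.
Proof.
  intros He Hd.
  pose proof (Derive_correct f 0 Hd) as H1.
  assert (H2 : is_derive (fun x => f (- x)) 0 (- Derive f 0)).
  { assert (Hf : is_derive f (- 0) (Derive f 0)) by (rewrite Ropp_0; exact H1).
    assert (H0 : is_derive (fun x : R => - x) 0 (-1)) by (auto_derive; [exact I| ring]).
    pose proof (is_derive_comp f (fun x => - x) 0 (Derive f 0) (-1) Hf H0) as H.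
    replace (- Derive f 0) with (scal (-1) (Derive f 0)); [exact H| ].
    unfold scal; simpl; unfold mult; simpl; ring. }
  assert (H3 : is_derive f 0 (- Derive f 0)).
  { eapply is_derive_ext; [| exact H2]. intros t. apply He. }
  pose proof (is_derive_unique _ _ _ H3). lra.
Qed.

Lemma decr_facts f : (forall x, ex_derive f x) -> is_even f -> strict_decr_pos f ->
  is_lim f p_infty 1 -> (forall x, 1 < f x) /\ (forall x, f x <= f 0).
Proof.
  intros Hd He Hs Hl.
  assert (G1 : forall y, 0 < y -> 1 <= f y).
  { intros y Hy. destruct (Rle_dec 1 (f y)) as [|Hn]; auto. exfalso.
    destruct (lim_eps f 1 Hl (1 - f y) ltac:(lra)) as [M HM].
    set (z := Rmax M y + 1).
    assert (M < z) by (unfold z; pose proof (Rmax_l M y); lra).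
    assert (y < z) by (unfold z; pose proof (Rmax_r M y); lra).
    specialize (HM z H). specialize (Hs y z Hy H0).
    apply Rabs_def2 in HM. lra. }
  assert (G2 : forall y, 0 < y -> 1 < f y).
  { intros y Hy. specialize (G1 (y+1) ltac:(lra)). specialize (Hs y (y+1) Hy ltac:(lra)). lra. }
  assert (G3 : forall y, 0 < y -> f y <= f 0).
  { intros y Hy. destruct (Rle_dec (f y) (f 0)) as [|Hn]; auto. exfalso.
    destruct (cont_eps f 0 (Hd 0) (f y - f 0) ltac:(lra)) as [d [Hd0 Hdd]].
    set (z := Rmin (d/2) (y/2)).
    assert (0 < z) by (unfold z; apply Rmin_pos; lra).
    assert (z <= d/2) by apply Rmin_l. assert (z <= y/2) by apply Rmin_r.
    assert (Rabs (z - 0) < d) by (rewrite Rminus_0_r, Rabs_right; lra).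
    specialize (Hdd z H2). specialize (Hs z y H ltac:(lra)).
    apply Rabs_def2 in Hdd. lra. }
  split.
  - intros x. destruct (Rtotal_order x 0) as [Hx|[Hx|Hx]].
    + rewrite <- He. apply G2. lra.
    + subst. specialize (G2 1 ltac:(lra)). specialize (G3 1 ltac:(lra)). lra.
    + apply G2; lra.
  - intros x. destruct (Rtotal_order x 0) as [Hx|[Hx|Hx]].
    + rewrite <- He. apply G3. lra.
    + subst. lra.
    + apply G3; lra.
Qed.

Lemma ivt_reach f : (forall x, ex_derive f x) -> is_lim f p_infty 1 ->
  forall y, 1 < y <= f 0 -> exists x, f x = y.
Proof.
  intros Hd Hl y Hy.
  destruct (lim_eps f 1 Hl (y - 1) ltac:(lra)) as [M HM].
  set (X := Rmax M 0 + 1).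
  assert (M < X) by (unfold X; pose proof (Rmax_l M 0); lra).
  assert (0 < X) by (unfold X; pose proof (Rmax_r M 0); lra).
  specialize (HM X H). apply Rabs_def2 in HM.
  assert (Hc : continuity f).
  { intros x. apply continuity_pt_filterlim. apply (@ex_derive_continuous R_AbsRing R_NormedModule). apply Hd. }
  destruct (IVT_gen f 0 X y Hc) as [x [_ Hx]].
  - rewrite Rmin_right by lra. rewrite Rmax_left by lra. lra.
  - exists x; exact Hx.
Qed.


Lemma Fn_deriv c s y : 0 < y -> is_derive (Fn c s) y (hn c s y).
Proof.
  intros Hy. unfold Fn, hn. auto_derive.
  - repeat split; try lra; apply Rgt_not_eq; nra.
  - field. lra.
Qed.


Lemma Pn_deriv' c s y : 0 < y -> is_derive (Pn c s) y (hn c s y * (exp (Fn c s y) - y)).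
Proof.
  intros Hy.
  assert (H1 := Fn_deriv c s y Hy).
  assert (H2 : is_derive (fun z => exp (Fn c s z)) y (hn c s y * exp (Fn c s y))).
  { apply (is_derive_comp exp (Fn c s)). apply is_derive_exp. exact H1. }
  assert (H3 : is_derive (fun z => 1 + Gn c s z) y (y * hn c s y)).
  { unfold Gn, hn. auto_derive.
    - repeat split; try lra; apply Rgt_not_eq; nra.
    - field. lra. }
  pose proof (is_derive_minus _ _ _ _ _ H2 H3) as H4.
  unfold minus, plus, opp in H4; simpl in H4.
  eapply is_derive_ext; [| replace (hn c s y * (exp (Fn c s y) - y)) with
     (hn c s y * exp (Fn c s y) + - (y * hn c s y)) by ring; exact H4].
  intros t. unfold Pn. simpl. ring.
Qed.

Lemma Fn_small c s m : 0 <= s -> 0 <= m <= 1 -> Rabs (Fn c s (1+m)) <= (5*c^2 + 3*s) * m.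
Proof.
  intros Hs Hm.
  destruct (Fn_bounds c s (c^2 - s - 1) m Hs ltac:(ring) (proj1 Hm)) as [F1 F2].
  replace (1 + (c^2 - s - 1)) with (c^2 - s) in * by ring.
  replace (1 + (c^2 - s - 1) + s) with (c^2) in * by ring.
  assert (Hc : 0 <= c^2) by apply pow2_ge_0.
  assert (M2 : 0 <= m^2 <= m) by (split; nra).
  assert (M3 : 0 <= m^3 <= m) by (split; nra).
  assert (A1 : (3*c^2 - s)/2*m^2 <= (2*c^2 + s)*m).
  { assert ((3*c^2-s)/2 <= 2*c^2+s) by lra. destruct (Rle_dec 0 ((3*c^2 - s)/2)).
    - assert ((3*c^2 - s)/2*m^2 <= (2*c^2+s)*m) by (apply pl; lra). lra.
    - nra. }
  assert (A2 : -((2*c^2 + s)*m) <= (3*c^2 - s)/2*m^2).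
  { destruct (Rle_dec 0 ((3*c^2 - s)/2)).
    - nra.
    - assert (-((3*c^2 - s)/2) <= 2*c^2+s) by lra.
      assert ((-((3*c^2 - s)/2))*m^2 <= (2*c^2+s)*m) by (apply pl; lra). lra. }
  assert (A3 : s*m^3/3 <= s*m) by nra.
  assert (A4 : 2*c^2*m^3 <= 2*c^2*m) by nra.
  assert (A5 : Rabs ((c^2 - s)*m) <= (c^2 + s)*m).
  { rewrite Rabs_mult, (Rabs_right m) by lra. apply Rmult_le_compat_r; [lra|].
    apply Rabs_le; lra. }
  apply Rabs_le_between in A5.
  apply Rabs_le. split; lra.
Qed.

Lemma Pn_small s g e m : 0 <= s -> 0 < g -> 0 < e -> 48 * (Lam s g)^3 * e <= 1 -> 0 <= m <= 4*g*e ->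
  Rabs (Pn (cc s g e) s (1+m)) <= (aa s g e + 1 + s + 10000 * (Lam s g)^11 * e^2) * m.
Proof.
  intros Hs Hg He HLe Hm.
  pose proof (P_est s g e m Hs Hg He HLe Hm) as HP.
  destruct (param_facts s g e Hs Hg He HLe) as [HL [He1 [_ [[Ha1 Ha2] [_ [_ [HgL _]]]]]]].
  set (L := Lam s g) in *. set (a := aa s g e) in *.
  assert (Hm1 : m <= 1).
  { assert (g*e <= L*e) by (apply Rmult_le_compat_r; lra).
    assert (1 <= L^3) by (apply pow_R1_Rle; lra).
    assert (L <= L^3) by (assert (1 <= L^2) by nra; replace (L^3) with (L*L^2) by ring; nra).
    assert (L*e <= L^3*e) by (apply Rmult_le_compat_r; lra). nra. }
  assert (M2 : 0 <= m^2 <= m) by (split; nra).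
  assert (M3 : 0 <= m^3 <= m) by (split; nra).
  assert (K0 : 0 <= 10000 * L^11 * e^2) by (apply Rmult_le_pos; [apply Rmult_le_pos; [lra| apply pow_le; lra]| nra]).
  assert (10000 * L^11 * e^2 * m^2 <= 10000 * L^11 * e^2 * m) by (apply Rmult_le_compat_l; lra).
  assert (a*m^2 <= a*m) by (apply Rmult_le_compat_l; lra).
  assert ((1+s)*m^3 <= (1+s)*m) by (apply Rmult_le_compat_l; lra).
  assert (0 <= a*m^2) by nra. assert (0 <= (1+s)*m^3) by nra.
  apply Rabs_le_between in HP. apply Rabs_le. split; nra.
Qed.

Lemma reduce s g e n u phi : 0 <= s -> 0 < g -> 0 < e -> 48 * (Lam s g)^3 * e <= 1 ->
  solitary_wave s g e n u phi ->
  (forall x, 1 < n x <= n 0) /\ (forall x, phi x = Fn (cc s g e) s (n x)) /\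
  (forall x, Derive phi x = hn (cc s g e) s (n x) * Derive n x) /\
  (forall x, e * (Derive phi x)^2 / 2 = Pn (cc s g e) s (n x)) /\ Derive phi 0 = 0.
Proof.
  intros Hs Hg He HLe Hsw.
  destruct Hsw as [Htw [Hnt [Hen [Heu [Hep [Hdn [Hdu Hdp]]]]]]].
  unfold tw_solution in Htw. cbv zeta in Htw.
  destruct Htw as [Sn [Su [Sp [Hpos [E1 [E2 [E3 [Ln1 [Ln2 [Lu1 [Lu2 [Lp1 Lp2]]]]]]]]]]]].
  change (Vspeed s + g * e) with (cc s g e) in *.
  destruct (param_facts s g e Hs Hg He HLe) as [HL [He1 [Haeq [[Ha1 Ha2] [Hc [Hc2 [HgL HVL]]]]]]].
  destruct (V_facts s Hs) as [V1 V2].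
  set (c := cc s g e) in *.
  assert (Hc0 : 1 <= c) by (unfold c, cc; nra).
  pose proof (smooth_d1 n Sn) as dn. pose proof (smooth_d1 u Su) as du.
  pose proof (smooth_d1 phi Sp) as dp. pose proof (smooth_d2 phi Sp) as dp2.
  destruct (decr_facts n dn Hen Hdn Ln1) as [N1 N2].
  assert (W1 : forall x y, n x * u x - c * n x = n y * u y - c * n y).
  { apply (const_deriv0 (fun y => n y * u y - c * n y)). intros x.
    pose proof (Derive_correct _ _ (ex_derive_mult n u x (dn x) (du x))) as Hnu.
    pose proof (Derive_correct _ _ (dn x)) as Hn.
    pose proof (is_derive_minus _ _ _ _ _ Hnu (is_derive_scal n x c _ Hn)) as H.
    specialize (E1 x).
    eapply is_derive_ext; [| replace 0 with (minus (Derive (fun y=> n y * u y) x) (c * Derive n x)) ; [exact H|]].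
    - intros; unfold minus, plus, opp; simpl; ring.
    - unfold minus, plus, opp; simpl. lra. }
  assert (K1 : n 0 * u 0 - c * n 0 + c = 0).
  { apply (zero_small _ (2 + c) 1); try lra.
    intros eta Heta.
    destruct (lim_eps n 1 Ln1 eta ltac:(lra)) as [M1 HM1].
    destruct (lim_eps u 0 Lu1 eta ltac:(lra)) as [M2 HM2].
    set (y := Rmax M1 M2 + 1).
    assert (M1 < y) by (unfold y; pose proof (Rmax_l M1 M2); lra).
    assert (M2 < y) by (unfold y; pose proof (Rmax_r M1 M2); lra).
    specialize (HM1 y H). specialize (HM2 y H0).
    apply Rabs_def2 in HM1. apply Rabs_def2 in HM2.
    rewrite (W1 0 y).
    apply Rabs_le.
    assert (Rabs (u y) <= eta) by (apply Rabs_le; lra).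
    assert (Rabs (n y * u y) <= 2 * eta).
    { rewrite Rabs_mult. rewrite (Rabs_right (n y)) by lra.
      assert (n y * Rabs (u y) <= 2 * eta) by (apply pl; try lra; apply Rabs_pos). lra. }
    apply Rabs_le_between in H2.
    assert (c * (n y - 1) <= c * eta) by (apply Rmult_le_compat_l; lra).
    assert (c * (-eta) <= c * (n y - 1)) by (apply Rmult_le_compat_l; lra).
    split; nra. }
  assert (Hu : forall x, u x = c - c / n x).
  { intros x. specialize (W1 x 0). specialize (N1 x).
    assert (H : n x * u x = c * n x - c) by lra.
    replace (u x) with ((n x * u x) / n x) by (field; lra). rewrite H. field. lra. }
  assert (Hu' : forall x, Derive u x = c * Derive n x / (n x)^2).
  { intros x. rewrite (Derive_ext u (fun y => c - c / n y) x Hu).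
    apply is_derive_unique. specialize (N1 x). auto_derive.
    - split; [exact (dn x)| split; [lra| exact I]].
    - match goal with |- ?a = ?b => change (@eq R a b) end. change (fun x0 : R => n x0) with n. field. lra. }
  assert (Hp' : forall x, Derive phi x = hn c s (n x) * Derive n x).
  { intros x. specialize (E2 x). rewrite Hu', Hu in E2. specialize (N1 x).
    unfold hn.
    assert (Derive phi x = - (- c * (c * Derive n x / n x ^ 2) + (c - c / n x) * (c * Derive n x / n x ^ 2) +
      s * Derive n x / n x)) by lra.
    rewrite H. field. lra. }
  assert (W2 : forall x y, phi x - Fn c s (n x) = phi y - Fn c s (n y)).
  { apply (const_deriv0 (fun y => phi y - Fn c s (n y))). intros x.
    pose proof (Derive_correct _ _ (dp x)) as Hp.
    assert (Hn0 : 0 < n x) by (specialize (N1 x); lra).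
    pose proof (is_derive_comp (Fn c s) n x _ _ (Fn_deriv c s (n x) Hn0) (Derive_correct _ _ (dn x))) as HF.
    pose proof (is_derive_minus _ _ _ _ _ Hp HF) as H.
    eapply is_derive_ext; [| replace 0 with (minus (Derive phi x) (scal (Derive n x) (hn c s (n x)))) ; [exact H|]].
    - intros; reflexivity.
    - unfold minus, plus, opp, scal; simpl; unfold mult; simpl. rewrite Hp'. ring. }
  assert (K2 : phi 0 - Fn c s (n 0) = 0).
  { apply (zero_small _ (1 + (5*c^2 + 3*s)) 1); try (apply pow2_ge_0 || nra); try lra.
    intros eta Heta.
    destruct (lim_eps n 1 Ln1 eta ltac:(lra)) as [M1 HM1].
    destruct (lim_eps phi 0 Lp1 eta ltac:(lra)) as [M2 HM2].
    set (y := Rmax M1 M2 + 1).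
    assert (M1 < y) by (unfold y; pose proof (Rmax_l M1 M2); lra).
    assert (M2 < y) by (unfold y; pose proof (Rmax_r M1 M2); lra).
    specialize (HM1 y H). specialize (HM2 y H0).
    apply Rabs_def2 in HM1. apply Rabs_def2 in HM2.
    rewrite (W2 0 y).
    specialize (N1 y).
    pose proof (Fn_small c s (n y - 1) Hs ltac:(lra)) as HF.
    replace (1 + (n y - 1)) with (n y) in HF by ring.
    apply Rabs_le_between in HF.
    assert ((5*c^2 + 3*s) * (n y - 1) <= (5*c^2 + 3*s) * eta).
    { apply Rmult_le_compat_l; [|lra]. pose proof (pow2_ge_0 c). lra. }
    apply Rabs_le. split; nra. }
  assert (Hphi : forall x, phi x = Fn c s (n x)).
  { intros x. specialize (W2 x 0). lra. }
  assert (W3 : forall x y, e * (Derive phi x)^2/2 - Pn c s (n x) = e * (Derive phi y)^2/2 - Pn c s (n y)).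
  { apply (const_deriv0 (fun y => e * (Derive phi y)^2/2 - Pn c s (n y))). intros x.
    assert (Hn0 : 0 < n x) by (specialize (N1 x); lra).
    assert (H1 : is_derive (fun y => e * (Derive phi y)^2/2) x (e * Derive phi x * Derive (Derive phi) x)).
    { auto_derive. exact (dp2 x).
      match goal with |- ?a = ?b => change (@eq R a b) end.
      change (fun x0 : R => Derive phi x0) with (Derive phi). field. }
    pose proof (is_derive_comp (Pn c s) n x _ _ (Pn_deriv' c s (n x) Hn0) (Derive_correct _ _ (dn x))) as HP.
    pose proof (is_derive_minus _ _ _ _ _ H1 HP) as H.
    eapply is_derive_ext; [| replace 0 with (minus (e * Derive phi x * Derive (Derive phi) x)
       (scal (Derive n x) (hn c s (n x) * (exp (Fn c s (n x)) - n x)))) ; [exact H|]].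
    - intros; reflexivity.
    - unfold minus, plus, opp, scal; simpl; unfold mult; simpl.
      assert (E3' : e * Derive (Derive phi) x = exp (phi x) - n x) by exact (E3 x).
      rewrite <- Hphi.
      replace (e * Derive phi x * Derive (Derive phi) x) with (Derive phi x * (e * Derive (Derive phi) x)) by ring.
      rewrite E3', Hp'. ring. }
  set (Bp := aa s g e + 1 + s + 10000 * (Lam s g)^11 * e^2).
  assert (HBp : 0 <= Bp).
  { unfold Bp. assert (0 <= 10000 * (Lam s g)^11 * e^2).
    { apply Rmult_le_pos; [apply Rmult_le_pos; [lra| apply pow_le; lra]| nra]. }
    assert (0 < g*e) by (apply Rmult_lt_0_compat; lra).
    lra. }
  assert (K3 : e * (Derive phi 0)^2/2 - Pn c s (n 0) = 0).
  { apply (zero_small _ (2*e + Bp) (Rmin 1 (4*g*e))); try lra.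
    apply Rmin_pos; nra.
    intros eta Heta.
    assert (Heta1 : eta <= 1) by (pose proof (Rmin_l 1 (4*g*e)); lra).
    assert (Heta2 : eta <= 4*g*e) by (pose proof (Rmin_r 1 (4*g*e)); lra).
    destruct (lim_eps n 1 Ln1 eta ltac:(lra)) as [M1 HM1].
    destruct (lim_eps phi 0 Lp1 eta ltac:(lra)) as [M2 HM2].
    set (X := Rmax M1 M2 + 1).
    assert (M1 < X) by (unfold X; pose proof (Rmax_l M1 M2); lra).
    assert (M2 < X) by (unfold X; pose proof (Rmax_r M1 M2); lra).
    destruct (MVT_gen phi X (X+1) (Derive phi)) as [xi [Hxi Hmvt]].
    { intros t _. apply Derive_correct. apply dp. }
    { intros t _. apply continuity_pt_filterlim. apply (@ex_derive_continuous R_AbsRing R_NormedModule). apply dp. }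
    rewrite Rmin_left in Hxi by lra. rewrite Rmax_right in Hxi by lra.
    pose proof (HM2 X H0) as A1. pose proof (HM2 (X+1) ltac:(lra)) as A2.
    pose proof (HM1 xi ltac:(lra)) as A3.
    apply Rabs_def2 in A1. apply Rabs_def2 in A2. apply Rabs_def2 in A3.
    replace (X + 1 - X) with 1 in Hmvt by ring.
    assert (Hd : Rabs (Derive phi xi) <= 2*eta) by (apply Rabs_le; lra).
    specialize (N1 xi).
    pose proof (Pn_small s g e (n xi - 1) Hs Hg He HLe ltac:(lra)) as HP.
    replace (1 + (n xi - 1)) with (n xi) in HP by ring. fold c in HP. fold Bp in HP.
    rewrite (W3 0 xi).
    assert (Q1 : (Derive phi xi)^2 <= 4*eta^2).
    { assert (Rabs (Derive phi xi) * Rabs (Derive phi xi) <= (2*eta)*(2*eta)) by (apply pl; try lra; apply Rabs_pos).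
      rewrite <- Rabs_mult in H1. rewrite Rabs_right in H1 by nra. nra. }
    assert (Q2 : e * (Derive phi xi)^2/2 <= 2*e*eta).
    { assert (e * (Derive phi xi)^2 <= e * (4*eta)) by (apply Rmult_le_compat_l; nra). lra. }
    assert (Q3 : 0 <= e * (Derive phi xi)^2/2) by (assert (0 <= (Derive phi xi)^2) by apply pow2_ge_0; nra).
    assert (Q4 : Bp * (n xi - 1) <= Bp * eta) by (apply Rmult_le_compat_l; lra).
    apply Rabs_le_between in HP.
    apply Rabs_le. split; nra. }
  split; [|split; [|split; [|split]]].
  - intros x. split; [apply N1| apply N2].
  - exact Hphi.
  - exact Hp'.
  - intros x. specialize (W3 x 0). lra.
  - apply even_deriv0; [exact Hep| apply dp].
Qed.


Lemma deriv_E n phi e : 0 < e -> (forall x, ex_derive n x) -> (forall x, ex_derive phi x) ->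
  (forall x, ex_derive (Derive phi) x) ->
  (forall x, e * Derive_n phi 2 x = exp (phi x) - n x) ->
  (forall x, Derive (Etilde e phi) x = (n x - exp (phi x))/e^2) /\
  (forall x, Derive_n (Etilde e phi) 2 x = (Derive n x - exp (phi x) * Derive phi x)/e^2).
Proof.
  intros He dn dp dp2 E3.
  assert (H1 : forall x, Derive (Etilde e phi) x = (n x - exp (phi x))/e^2).
  { intros x. unfold Etilde. apply (is_derive_unique (fun y => - Derive phi y / e) x).
    assert (E3' : e * Derive (Derive phi) x = exp (phi x) - n x) by exact (E3 x).
    auto_derive. { repeat split; try exact I; try lra; apply dp2. }
    match goal with |- ?a = ?b => change (@eq R a b) end.
    change (fun x0 : R => Derive phi x0) with (Derive phi).
    replace (n x - exp (phi x)) with (- (e * Derive (Derive phi) x)) by (rewrite E3'; ring).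
    field. lra. }
  split; auto.
  intros x. change (Derive_n (Etilde e phi) 2 x) with (Derive (Derive (Etilde e phi)) x).
  rewrite (Derive_ext _ _ x H1). apply (is_derive_unique (fun y => (n y - exp (phi y))/e^2) x).
  auto_derive. { repeat split; try exact I; try lra; try apply dn; try apply dp. }
  match goal with |- ?a = ?b => change (@eq R a b) end.
  change (fun x0 : R => n x0) with n. change (fun x0 : R => phi x0) with phi.
  field. lra.
Qed.

Lemma deriv_N n e x : 0 < e -> ex_derive n x -> Derive (Ntilde e n) x = Derive n x / e.
Proof.
  intros He dn. unfold Ntilde. apply (is_derive_unique (fun y => (n y - 1)/e) x). auto_derive.
  { repeat split; try exact I; try lra; apply dn. }
  match goal with |- ?a = ?b => change (@eq R a b) end.
  change (fun x0 : R => n x0) with n. field. lra.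
Qed.

Lemma Pbounds s g e m : 0 <= s -> 0 < g -> 0 < e -> 48 * (Lam s g)^3 * e <= 1 -> 0 <= m <= 4*g*e ->
  m^2 * (Vspeed s * g * e - (1+s)*m/3 - 10000 * (Lam s g)^11 * e^2) <= Pn (cc s g e) s (1+m) <=
  m^2 * (Vspeed s * g * e + g^2*e^2/2 - (1+s)*m/3 + 10000 * (Lam s g)^11 * e^2).
Proof.
  intros Hs Hg He HLe Hm.
  pose proof (P_est s g e m Hs Hg He HLe Hm) as HP.
  destruct (param_facts s g e Hs Hg He HLe) as [_ [_ [Haeq _]]].
  rewrite Haeq in HP. apply Rabs_le_between in HP.
  split; nra.
Qed.


Lemma m0_bounds s g e n u phi : 0 <= s -> 0 < g -> 0 < e -> 48 * (Lam s g)^3 * e <= 1 ->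
  40 * (g^2 + 10000 * (Lam s g)^11) * e <= g ->
  solitary_wave s g e n u phi ->
  2.85 * g * e < Vspeed s * (n 0 - 1) < 3.15 * g * e.
Proof.
  intros Hs Hg He HLe Hsm Hsw.
  destruct (reduce s g e n u phi Hs Hg He HLe Hsw) as [N1 [Hphi [Hp' [HP Hp0]]]].
  destruct (V_facts s Hs) as [V1 V2].
  set (V := Vspeed s) in *. set (K0 := 10000 * (Lam s g)^11) in *.
  assert (HK0 : 0 <= K0) by (unfold K0; destruct (param_facts s g e Hs Hg He HLe) as [HL _];
    apply Rmult_le_pos; [lra| apply pow_le; lra]).
  assert (Hge : 0 < g * e) by (apply Rmult_lt_0_compat; lra).
  assert (HK0e : K0 * e < g / 20).
  { assert (0 < g^2 * e) by (apply Rmult_lt_0_compat; nra). nra. }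
  assert (Hg2e : (g^2/2) * e < g/20).
  { assert (0 <= K0 * e) by nra. nra. }
  set (m0 := n 0 - 1).
  assert (Hm0 : 0 < m0) by (unfold m0; specialize (N1 0); lra).
  assert (HP0 : Pn (cc s g e) s (1 + m0) = 0).
  { unfold m0. replace (1 + (n 0 - 1)) with (n 0) by ring. rewrite <- HP, Hp0. field. }
  split.
  - destruct (Rlt_le_dec (2.85 * g * e) (V * m0)) as [|Hc]; auto. exfalso.
    assert (m0 <= V * m0) by nra.
    pose proof (Pbounds s g e m0 Hs Hg He HLe ltac:(lra)) as [P1 _].
    fold V K0 in P1. rewrite HP0 in P1.
    assert (B1 : (1+s)*m0 <= V * (2.85 * g * e)).
    { rewrite <- V2. replace (V^2*m0) with (V*(V*m0)) by ring. apply Rmult_le_compat_l; lra. }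
    assert (B2 : K0 * e^2 < 0.05 * g * e) by nra.
    assert (B3 : 0.05 * g * e <= 0.05 * V * g * e) by nra.
    assert (B4 : 0 < V * g * e - (1+s)*m0/3 - K0 * e^2) by nra.
    assert (0 < m0^2) by nra.
    assert (0 < m0^2 * (V * g * e - (1+s)*m0/3 - K0 * e^2)) by (apply Rmult_lt_0_compat; lra).
    lra.
  - destruct (Rlt_le_dec (V * m0) (3.15 * g * e)) as [|Hc]; auto. exfalso.
    set (m1 := 3.15 * g * e / V).
    assert (Hm1 : 0 < m1) by (unfold m1; apply Rdiv_lt_0_compat; lra).
    assert (Vm1 : V * m1 = 3.15 * g * e) by (unfold m1; field; lra).
    assert (m1 <= m0) by nra.
    assert (m1 <= V * m1) by nra.
    destruct (ivt_reach n (smooth_d1 n (proj1 (proj1 Hsw))) (proj1 (proj2 (proj2 (proj2 (proj2 (proj2 (proj2 (proj2 (proj1 Hsw))))))))) (1 + m1)) as [x Hx].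
    { unfold m0 in *. lra. }
    assert (Hpos : 0 <= Pn (cc s g e) s (1 + m1)).
    { rewrite <- Hx, <- HP. assert (0 <= (Derive phi x)^2) by apply pow2_ge_0. nra. }
    pose proof (Pbounds s g e m1 Hs Hg He HLe ltac:(lra)) as [_ P2].
    fold V K0 in P2.
    assert (B1 : (1+s)*m1 = V * (3.15 * g * e)).
    { rewrite <- V2, <- Vm1. ring. }
    assert (B2 : V * g * e + g^2*e^2/2 - (1+s)*m1/3 + K0 * e^2 < 0).
    { rewrite B1. assert (0.05 * g * e <= 0.05 * V * g * e) by nra. nra. }
    assert (0 < m1^2) by nra.
    assert (m1^2 * (V * g * e + g^2*e^2/2 - (1+s)*m1/3 + K0 * e^2) < 0).
    { assert (0 < m1^2 * (-(V * g * e + g^2*e^2/2 - (1+s)*m1/3 + K0 * e^2))) by (apply Rmult_lt_0_compat; lra). lra. }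
    lra.
Qed.



Lemma abs_le_sq y : Rabs y <= 1 + y^2.
Proof.
  assert (0 <= (Rabs y - 1/2)^2) by apply pow2_ge_0.
  assert (Hy : y^2 = Rabs y * Rabs y) by (rewrite <- Rabs_mult, Rabs_right; [ring| nra]).
  nra.
Qed.

Lemma div_sq_le a b e k : 0 < e -> a * e^k <= b * e^k -> a <= b.
Proof. intros He H. apply Rmult_le_reg_r with (e^k); auto. apply pow_lt; auto. Qed.

Lemma part2 s g e n u phi delta : 0 <= s -> 0 < g -> 0 < e -> 48 * (Lam s g)^3 * e <= 1 ->
  40 * (g^2 + 10000 * (Lam s g)^11) * e <= g ->
  0 < delta < g / (1 + s) ->
  solitary_wave s g e n u phi ->
  forall x, Ntilde e n x <= delta -> Rabs (Etilde e phi x) > sqrt g * Ntilde e n x.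
Proof.
  intros Hs Hg He HLe Hsm Hd Hsw x HN.
  destruct (reduce s g e n u phi Hs Hg He HLe Hsw) as [N1 [Hphi [Hp' [HP Hp0]]]].
  pose proof (m0_bounds s g e n u phi Hs Hg He HLe Hsm Hsw) as [M1 M2].
  destruct (V_facts s Hs) as [V1 V2].
  set (V := Vspeed s) in *. set (K0 := 10000 * (Lam s g)^11) in *.
  assert (HK0 : 0 <= K0) by (unfold K0; destruct (param_facts s g e Hs Hg He HLe) as [HL _];
    apply Rmult_le_pos; [lra| apply pow_le; lra]).
  assert (Hge : 0 < g * e) by (apply Rmult_lt_0_compat; lra).
  assert (HK0e : K0 * e <= g / 40).
  { assert (0 < g^2 * e) by (apply Rmult_lt_0_compat; nra). nra. }
  set (m := n x - 1).
  assert (Hm : 0 < m) by (unfold m; specialize (N1 x); lra).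
  assert (Hmm0 : m <= n 0 - 1) by (unfold m; specialize (N1 x); lra).
  assert (Hm4 : m <= 4 * g * e) by nra.
  assert (Hmd : m <= delta * e).
  { unfold Ntilde in HN. fold m in HN. apply Rmult_le_compat_r with (r := e) in HN; [|lra].
    unfold Rdiv in HN. rewrite Rmult_assoc, Rinv_l, Rmult_1_r in HN; lra. }
  pose proof (Pbounds s g e m Hs Hg He HLe ltac:(lra)) as [P1 _].
  fold V K0 in P1. replace (1 + m) with (n x) in P1 by (unfold m; ring).
  rewrite <- HP in P1.
  assert (B1 : (1+s) * m < g * e).
  { assert ((1+s)*m <= (1+s)*(delta*e)) by (apply Rmult_le_compat_l; lra).
    assert ((1+s)*delta < g) by (apply Rmult_lt_reg_r with (/(1+s)); [apply Rinv_0_lt_compat; lra|];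
      replace ((1+s)*delta*/(1+s)) with delta by (field; lra); exact (proj2 Hd)).
    assert ((1+s)*delta*e < g*e) by (apply Rmult_lt_compat_r; lra). lra. }
  assert (B2 : g * e / 2 < V * g * e - (1+s)*m/3 - K0 * e^2).
  { assert (g*e <= V*g*e) by nra. assert (K0*e^2 <= g/40*e) by nra. nra. }
  assert (B3 : m^2 * (g*e/2) < e * Derive phi x ^ 2 / 2).
  { assert (0 < m^2) by nra.
    assert (m^2 * (g*e/2) < m^2 * (V * g * e - (1+s)*m/3 - K0 * e^2)) by (apply Rmult_lt_compat_l; lra).
    lra. }
  set (E := Etilde e phi x). set (N := Ntilde e n x).
  assert (HE : E * e = - Derive phi x) by (unfold E, Etilde; field; lra).
  assert (HNN : N * e = m) by (unfold N, Ntilde, m; field; lra).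
  assert (HN0 : 0 < N) by (apply Rmult_lt_reg_r with e; lra).
  assert (Hsq : g * N^2 < E^2).
  { apply Rmult_lt_reg_r with (e^3). apply pow_lt; lra.
    assert (E^2*e^3 = e * (Derive phi x)^2) by (replace (E^2*e^3) with ((E*e)^2*e) by ring; rewrite HE; ring).
    assert (g * N^2 * e^3 = e * (m^2 * g)) by (replace (g*N^2*e^3) with (e*((N*e)^2*g)) by ring; rewrite HNN; ring).
    nra. }
  assert (Hsg : sqrt g * sqrt g = g) by (apply sqrt_sqrt; lra).
  assert (0 < sqrt g) by (apply sqrt_lt_R0; lra).
  destruct (Rle_lt_dec (Rabs E) (sqrt g * N)) as [Hc|Hc]; [|lra].
  exfalso.
  assert (Rabs E * Rabs E <= (sqrt g * N) * (sqrt g * N)) by (apply pl; try apply Rabs_pos; try lra; nra).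
  rewrite <- Rabs_mult in H0. rewrite Rabs_right in H0 by nra. nra.
Qed.

Lemma part1 s g e n u phi : 0 <= s -> 0 < g -> 0 < e -> 48 * (Lam s g)^3 * e <= 1 ->
  40 * (g^2 + 10000 * (Lam s g)^11) * e <= g ->
  solitary_wave s g e n u phi ->
     Ntilde e n 0 > 2 * g / Vspeed s /\
     2 * g ^ 2 < Derive (Etilde e phi) 0 < 4 * g ^ 2 /\
     Rbar_lt (Finite (1/2))
       (Lub_Rbar (fun y => exists x, y = hfun s g e (n x))) /\
     Rbar_lt (Lub_Rbar (fun y => exists x, y = hfun s g e (n x)))
       (Finite (3/2)) /\
     (forall x, Rabs (Derive (Ntilde e n) x) + Rabs (Etilde e phi x)
                + Rabs (Derive_n (Etilde e phi) 2 x)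
       <= 3 + 10 * (16 * g^2 * (2 * (Lam s g)^2 + 10000 * (Lam s g)^11))
            + 8712 * (16 * g^2 * (2 * (Lam s g)^2 + 10000 * (Lam s g)^11)) * (Lam s g)^6).
Proof.
  intros Hs Hg He HLe Hsm Hsw.
  destruct (reduce s g e n u phi Hs Hg He HLe Hsw) as [N1 [Hphi [Hp' [HP Hp0]]]].
  pose proof (m0_bounds s g e n u phi Hs Hg He HLe Hsm Hsw) as [M1 M2].
  destruct (V_facts s Hs) as [V1 V2].
  destruct (param_facts s g e Hs Hg He HLe) as [HL [He1 [Haeq [[Ha1 Ha2] [Hc [Hc2 [HgL HVL]]]]]]].
  pose proof Hsw as Hsw'.
  destruct Hsw' as [Htw _]. unfold tw_solution in Htw. cbv zeta in Htw.
  destruct Htw as [Sn [Su [Sp [Hpos [E1 [E2 [E3 _]]]]]]].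
  pose proof (smooth_d1 n Sn) as dn. pose proof (smooth_d1 phi Sp) as dp.
  pose proof (smooth_d2 phi Sp) as dp2.
  destruct (deriv_E n phi e He dn dp dp2 E3) as [DE1 DE2].
  set (V := Vspeed s) in *. set (L := Lam s g) in *. set (K0 := 10000 * L^11) in *.
  set (a := aa s g e) in *. set (c := cc s g e) in *.
  assert (HK0 : 0 <= K0) by (unfold K0; apply Rmult_le_pos; [lra| apply pow_le; lra]).
  assert (Hge : 0 < g * e) by (apply Rmult_lt_0_compat; lra).
  assert (Hge40 : g * e <= 1/40).
  { assert (0 <= K0 * e) by nra. nra. }
  set (m0 := n 0 - 1) in *.
  assert (Hm0 : 0 < m0) by (unfold m0; specialize (N1 0); lra).
  assert (Hm04 : m0 <= 4*g*e) by nra.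
  assert (L3 : L^2 <= L^3) by nra.
  assert (CF : forall x, 0 <= n x - 1 <= 4*g*e /\
     Rabs (hn c s (n x) - 1) <= 15 * L^3 * e /\
     0 <= Fn c s (n x) <= 3 * L^2 * (n x - 1) /\ hn c s (n x) <= 1 + a).
  { intros x. assert (Hx : 0 <= n x - 1 <= 4*g*e) by (specialize (N1 x); unfold m0 in *; lra).
    destruct (core s g e (n x - 1) Hs Hg He HLe Hx) as [_ [C2 [C3 C4]]].
    replace (1 + (n x - 1)) with (n x) in * by ring. auto. }
  split; [|split; [|split; [|split]]].
  -
    unfold Ntilde. fold m0. apply Rlt_gt.
    apply Rmult_lt_reg_r with (e * V). nra.
    replace (2 * g / V * (e * V)) with (2 * g * e) by (field; lra).
    replace (m0 / e * (e * V)) with (V * m0) by (field; lra). lra.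
  -
    rewrite DE1. rewrite Hphi.
    assert (HP0 : Pn c s (n 0) = 0) by (rewrite <- HP, Hp0; field).
    unfold Pn in HP0.
    assert (Hex : exp (Fn c s (n 0)) = 1 + Gn c s (n 0)) by lra.
    rewrite Hex. unfold Gn.
    replace (n 0) with (1 + m0) by (unfold m0; ring).
    rewrite Hc2.
    replace (1 + m0 - (1 + ((1 + a + s) * (1 - 1 / (1 + m0)) - s * (1 + m0 - 1))))
      with (m0 * ((1+s)*m0 - a) / (1+m0)) by (field; lra).
    rewrite Haeq. fold V.
    set (q := V * m0) in *.
    assert (Hx : m0 * ((1 + s) * m0 - (2 * V * g * e + g ^ 2 * e ^ 2)) = q*(q - 2*g*e) - m0 * g^2*e^2).
    { unfold q. rewrite <- V2. ring. }
    assert (Hq1 : q*(q - 2*g*e) > 2.4225 * (g*e)^2).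
    { assert (q - 2*g*e > 0.85*g*e) by lra.
      assert (2.85*g*e*(0.85*g*e) < q * (q - 2*g*e)) by (apply Rmult_le_0_lt_compat; nra).
      nra. }
    assert (Hq2 : q*(q - 2*g*e) < 3.6225 * (g*e)^2).
    { assert (q - 2*g*e < 1.15*g*e) by lra.
      assert (q * (q - 2*g*e) < 3.15*g*e*(1.15*g*e)) by (apply Rmult_le_0_lt_compat; nra).
      nra. }
    assert (Hq3 : 0 <= m0 * g^2 * e^2 <= 3.15 * (g*e)^3).
    { split. nra. assert (m0 <= q) by (unfold q; nra).
      assert (m0 * (g^2*e^2) <= (3.15*g*e) * (g^2*e^2)) by (apply Rmult_le_compat_r; nra). nra. }
    assert (Hden : 0 < (1+m0) * e^2) by nra.
    split.
    + apply Rmult_lt_reg_r with ((1+m0) * e^2); auto.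
      replace (m0 * ((1 + s) * m0 - (2 * V * g * e + g ^ 2 * e ^ 2)) / (1 + m0) / e ^ 2 * ((1 + m0) * e ^ 2))
        with (m0 * ((1 + s) * m0 - (2 * V * g * e + g ^ 2 * e ^ 2))) by (field; lra).
      rewrite Hx.
      assert (m0 <= 3.15 * g * e) by (unfold q in *; nra).
      nra.
    + apply Rmult_lt_reg_r with ((1+m0) * e^2); auto.
      replace (m0 * ((1 + s) * m0 - (2 * V * g * e + g ^ 2 * e ^ 2)) / (1 + m0) / e ^ 2 * ((1 + m0) * e ^ 2))
        with (m0 * ((1 + s) * m0 - (2 * V * g * e + g ^ 2 * e ^ 2))) by (field; lra).
      rewrite Hx. nra.
  -
    destruct (Lub_Rbar_correct (fun y => exists x, y = hfun s g e (n x))) as [Hub _].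
    assert (H0 := Hub (hfun s g e (n 0)) (ex_intro _ 0 eq_refl)).
    apply Rbar_lt_le_trans with (Finite (hfun s g e (n 0))); auto.
    change (1/2 < hn c s (n 0)).
    destruct (CF 0) as [_ [Ch _]]. apply Rabs_le_between in Ch. lra.
  -
    destruct (Lub_Rbar_correct (fun y => exists x, y = hfun s g e (n x))) as [_ Hlub].
    assert (ub : is_ub_Rbar (fun y => exists x, y = hfun s g e (n x)) (1 + a)).
    { intros y [x Hy]. rewrite Hy. simpl. change (hfun s g e (n x)) with (hn c s (n x)).
      destruct (CF x) as [_ [_ [_ Ch]]]. lra. }
    apply Rbar_le_lt_trans with (Finite (1 + a)); [apply Hlub; exact ub|].
    change (1 + a < 3/2). assert (L^2*e <= L^3*e) by (apply Rmult_le_compat_r; lra). lra.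
  -
    intros x.
    destruct (CF x) as [Cm [Ch [CFn Chu]]].
    set (m := n x - 1) in *.
    pose proof (Pbounds s g e m Hs Hg He HLe Cm) as [_ P2].
    fold V L in P2. fold K0 in P2. replace (1 + m) with (n x) in P2 by (unfold m; ring).
    rewrite <- HP in P2.
    set (Kp := 16 * g^2 * (2 * L^2 + K0)).
    assert (HKp : 0 <= Kp) by (unfold Kp; apply Rmult_le_pos; [nra| nra]).
    set (D := Derive phi x) in *. set (h := hn c s (n x)) in *. set (dnx := Derive n x) in *.
    assert (HD : D^2 <= 2 * Kp * e^2).
    { assert (Bk : V*g*e + g^2*e^2/2 - (1+s)*m/3 + K0*e^2 <= (2*L^2 + K0)*e).
      { assert (V*g <= L*L) by (apply pl; lra).
        assert (g^2*e <= L^2) by (assert (g^2 <= L^2) by nra; nra).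
        assert (K0*e^2 <= K0*e).
        { replace (K0*e^2) with ((K0*e)*e) by ring. assert (0 <= K0*e) by (apply Rmult_le_pos; lra).
          assert ((K0*e)*e <= (K0*e)*1) by (apply Rmult_le_compat_l; lra). lra. }
        assert (0 <= (1+s)*m) by (apply Rmult_le_pos; lra).
        assert (V*g*e <= L*L*e) by (apply Rmult_le_compat_r; lra).
        assert (g^2*e^2 <= L^2*e) by (replace (g^2*e^2) with ((g^2*e)*e) by ring; apply Rmult_le_compat_r; lra).
        nra. }
      assert (Bm : m^2 <= 16*g^2*e^2) by nra.
      assert (0 <= (2*L^2 + K0)*e) by nra.
      assert (m^2 * (V*g*e + g^2*e^2/2 - (1+s)*m/3 + K0*e^2) <= m^2 * ((2*L^2 + K0)*e)).
      { apply Rmult_le_compat_l; [nra|lra]. }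
      assert (m^2 * ((2*L^2 + K0)*e) <= (16*g^2*e^2) * ((2*L^2 + K0)*e)) by (apply Rmult_le_compat_r; lra).
      assert (e * D^2 <= 2 * Kp * e^3) by (unfold Kp; lra).
      apply (div_sq_le _ _ e 1); auto. nra. }
    assert (Hh : 1/2 <= h) by (apply Rabs_le_between in Ch; lra).
    assert (HDh : D = h * dnx) by (unfold D, h, dnx; apply Hp').
    set (E := Etilde e phi x).
    assert (HE : E * e = - D) by (unfold E, Etilde; fold D; field; lra).
    assert (HE2 : E^2 <= 2 * Kp).
    { apply (div_sq_le _ _ e 2); auto. replace (E^2*e^2) with ((E*e)^2) by ring. rewrite HE. nra. }
    rewrite (deriv_N n e x He (dn x)). fold dnx.
    set (Nd := dnx / e).
    assert (HNd : Nd * e = dnx) by (unfold Nd; field; lra).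
    assert (Hdn2 : dnx^2 <= 4 * D^2).
    { rewrite HDh. assert (1/4 <= h^2) by nra. assert (0 <= dnx^2) by nra. nra. }
    assert (HN2 : Nd^2 <= 8 * Kp).
    { apply (div_sq_le _ _ e 2); auto. replace (Nd^2*e^2) with ((Nd*e)^2) by ring. rewrite HNd. nra. }
    rewrite DE2. fold dnx D. rewrite Hphi.
    set (F := Fn c s (n x)) in *.
    assert (HF : F <= 12 * L^3 * e).
    { assert (m <= 4*L*e) by nra. assert (3*L^2*m <= 3*L^2*(4*L*e)) by (apply Rmult_le_compat_l; nra). nra. }
    assert (HF4 : F <= 1/4) by nra.
    assert (Ex1 : 1 <= exp F) by (pose proof (exp_lb2 F (proj1 CFn)); nra).
    assert (Ex2 : exp F <= 1 + 2*F) by (pose proof (exp_ub3 F ltac:(lra)); nra).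
    set (w := 1 - exp F * h).
    assert (Hw : Rabs w <= 33 * L^3 * e).
    { apply Rabs_le_between in Ch.
      assert (a <= 3*L^3*e) by nra.
      assert (exp F * h <= (1 + 2*F)*(1+a)) by (apply pl; nra).
      assert (h <= exp F * h) by nra.
      assert (2*F*a <= 2*(1/4)*(3*L^3*e)) by (apply Rmult_le_compat; nra).
      unfold w. apply Rabs_le. nra. }
    set (EE2 := (dnx - exp F * D) / e^2).
    assert (HEE2' : EE2 * e^2 = dnx * w) by (unfold EE2, w; rewrite HDh; field; lra).
    assert (HEE22 : EE2^2 <= 8712 * Kp * L^6).
    { apply (div_sq_le _ _ e 4); auto.
      replace (EE2^2*e^4) with ((EE2*e^2)^2) by ring. rewrite HEE2'.
      assert (w^2 <= (33*L^3*e)^2).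
      { assert (Rabs w * Rabs w <= (33*L^3*e)*(33*L^3*e)) by (apply pl; try apply Rabs_pos; lra).
        rewrite <- Rabs_mult in H. rewrite Rabs_right in H by nra. nra. }
      assert (dnx^2 <= 8*Kp*e^2) by nra.
      assert (dnx^2 * w^2 <= (8*Kp*e^2) * ((33*L^3*e)^2)) by (apply pl; nra).
      nra. }
    pose proof (abs_le_sq Nd). pose proof (abs_le_sq E). pose proof (abs_le_sq EE2).
    unfold Nd in *; unfold EE2 in *. lra.
Qed.


Theorem lemma4p1 (sigma gamma : R) (Hsigma : 0 <= sigma) (Hgamma : 0 < gamma) :
  exists eps0 C delta0 : R, 0 < eps0 /\ 0 < C /\ 0 < delta0 /\
  (* part (1) *)
  (forall eps, 0 < eps < eps0 -> forall n u phi : R -> R,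
     solitary_wave sigma gamma eps n u phi ->
     Ntilde eps n 0 > 2 * gamma / Vspeed sigma /\
     2 * gamma ^ 2 < Derive (Etilde eps phi) 0 < 4 * gamma ^ 2 /\
     Rbar_lt (Finite (1/2))
       (Lub_Rbar (fun y => exists x, y = hfun sigma gamma eps (n x))) /\
     Rbar_lt (Lub_Rbar (fun y => exists x, y = hfun sigma gamma eps (n x)))
       (Finite (3/2)) /\
     (forall x, Rabs (Derive (Ntilde eps n) x) + Rabs (Etilde eps phi x)
                + Rabs (Derive_n (Etilde eps phi) 2 x) <= C)) /\
  (* part (2) *)
  (forall delta, 0 < delta < delta0 ->
   forall eps, 0 < eps < eps0 -> forall n u phi : R -> R,
     solitary_wave sigma gamma eps n u phi ->
     forall x, Ntilde eps n x <= delta ->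
       Rabs (Etilde eps phi x) > sqrt gamma * Ntilde eps n x).
Proof.
  destruct (V_facts sigma Hsigma) as [V1 V2].
  assert (HL : 1 <= Lam sigma gamma) by (unfold Lam; lra).
  assert (HL3 : 0 < 48 * (Lam sigma gamma)^3) by (assert (0 < (Lam sigma gamma)^3) by (apply pow_lt; lra); lra).
  assert (HK0 : 0 <= 10000 * (Lam sigma gamma)^11) by (apply Rmult_le_pos; [lra| apply pow_le; lra]).
  assert (HK : 0 < 40 * (gamma^2 + 10000 * (Lam sigma gamma)^11)) by (assert (0 < gamma^2) by nra; lra).
  set (Kp := 16 * gamma^2 * (2 * (Lam sigma gamma)^2 + 10000 * (Lam sigma gamma)^11)).
  assert (HKp : 0 <= Kp) by (unfold Kp; apply Rmult_le_pos; [nra| assert (0 <= (Lam sigma gamma)^2) by nra; lra]).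
  assert (HL6 : 0 <= (Lam sigma gamma)^6) by (apply pow_le; lra).
  exists (Rmin (1 / (48 * (Lam sigma gamma)^3)) (gamma / (40 * (gamma^2 + 10000 * (Lam sigma gamma)^11)))),
    (3 + 10 * Kp + 8712 * Kp * (Lam sigma gamma)^6), (gamma / (1 + sigma)).
  assert (Heps : forall eps, 0 < eps < Rmin (1 / (48 * (Lam sigma gamma)^3)) (gamma / (40 * (gamma^2 + 10000 * (Lam sigma gamma)^11))) ->
     48 * (Lam sigma gamma)^3 * eps <= 1 /\ 40 * (gamma^2 + 10000 * (Lam sigma gamma)^11) * eps <= gamma).
  { intros eps He.
    pose proof (Rmin_l (1 / (48 * (Lam sigma gamma)^3)) (gamma / (40 * (gamma^2 + 10000 * (Lam sigma gamma)^11)))).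
    pose proof (Rmin_r (1 / (48 * (Lam sigma gamma)^3)) (gamma / (40 * (gamma^2 + 10000 * (Lam sigma gamma)^11)))).
    split.
    - assert (48 * Lam sigma gamma ^ 3 * eps <= 48 * Lam sigma gamma ^ 3 * (1 / (48 * Lam sigma gamma ^ 3)))
        by (apply Rmult_le_compat_l; lra).
      replace (48 * Lam sigma gamma ^ 3 * (1 / (48 * Lam sigma gamma ^ 3))) with 1 in H1 by (field; lra). lra.
    - assert (40 * (gamma^2 + 10000 * (Lam sigma gamma)^11) * eps <=
              40 * (gamma^2 + 10000 * (Lam sigma gamma)^11) * (gamma / (40 * (gamma^2 + 10000 * (Lam sigma gamma)^11))))
        by (apply Rmult_le_compat_l; lra).
      replace (40 * (gamma^2 + 10000 * (Lam sigma gamma)^11) * (gamma / (40 * (gamma^2 + 10000 * (Lam sigma gamma)^11))))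
        with gamma in H1 by (field; lra). lra. }
  split; [|split; [|split; [|split]]].
  - apply Rmin_pos; apply Rdiv_lt_0_compat; lra.
  - assert (0 <= Kp * (Lam sigma gamma)^6) by (apply Rmult_le_pos; lra). lra.
  - apply Rdiv_lt_0_compat; lra.
  - intros eps He n u phi Hsw. destruct (Heps eps He) as [H1 H2].
    exact (part1 sigma gamma eps n u phi Hsigma Hgamma (proj1 He) H1 H2 Hsw).
  - intros delta Hd eps He n u phi Hsw x Hx. destruct (Heps eps He) as [H1 H2].
    exact (part2 sigma gamma eps n u phi delta Hsigma Hgamma (proj1 He) H1 H2 Hd Hsw x Hx).
Qed.
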